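(* Let $m,n\ge 1$ be integers, let $\mathbf{x}=(x_1,\dots,x_n)\in\mathbb{R}^n$ be fixed, and let $W=(w_{ij}), H=(h_{ij})\in\mathbb{R}^{m\times n}$. For $1\le i\le m$ define $\varphi_{\mathbf{x},i}(W)=\max_{1\le j\le n}(w_{ij}+x_j)$, let $J_i=\{j\in\{1,\dots,n\}: \varphi_{\mathbf{x},i}(W)=w_{ij}+x_j\}$, and let $K_i=\{k\in\{1,\dots,n\}: h_{ik}>\max_{j\in J_i}h_{ij}\}$. Define $$\epsilon_i=\min_{k\in K_i}\frac{\varphi_{\mathbf{x},i}(W)-(w_{ik}+x_k)}{h_{ik}-\max_{j\in J_i}h_{ij}},\qquad 1\le i\le m,$$ (with the convention that the minimum over the empty set is $+\infty$) and $\epsilon=\min_{1\le i\le m}\epsilon_i$. Let $\delta_{\mathbf{x}}:\mathbb{R}^{m\times n}\to\mathbb{R}^m$ be $\delta_{\mathbf{x}}(W)=(\varphi_{\mathbf{x},i}(W))_{1\le i\le m}$. Then for every $\eta\in\mathbb{R}^+=[0,\infty)$, $$\eta\in[0,\epsilon]\iff \delta_{\mathbf{x}}(W+\eta H)=\delta_{\mathbf{x}}(W)+\eta\Big(\max_{j\in J_i}h_{ij}\Big)_{1\le i\le m}.$$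
   Context: $\delta_{\mathbf{x}}$ is the dilation layer viewed as a function of its weight matrix $W$ for fixed input $\mathbf{x}$: its $i$-th output is $\max_{1\le k\le n}(x_k+w_{ik})$. When $K_i$ is empty, $\epsilon_i=+\infty$ and $[0,\epsilon]$ is understood as $[0,\infty)$ if $\epsilon=+\infty$. *)

(* Defs.v *)
From HB Require Import structures.
From mathcomp Require Import all_boot all_order all_algebra.
From mathcomp Require Import reals constructive_ereal.
Set Implicit Arguments. Unset Strict Implicit. Unset Printing Implicit Defensive.
Import Order.TTheory GRing.Theory Num.Theory.
Local Open Scope ring_scope.

Section Dil.
Variable R : realType.

(* Maximum of F over a finite set A; meaningful (= true maximum) when A is
   nonempty; the value 0 on the empty set is never used. *)
Definition setmax (I : finType) (A : {set I}) (F : I -> R) : R :=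
  match [pick j in A] with
  | Some j0 => \big[Num.max/F j0]_(j in A) F j
  | None => 0
  end.

Variables (m n : nat) (x : 'rV[R]_n).

Definition phi (W : 'M[R]_(m, n)) (i : 'I_m) : R :=
  setmax [set: 'I_n] (fun j => W i j + x 0 j).

Definition delta (W : 'M[R]_(m, n)) : 'cV[R]_m := \col_i phi W i.

Definition Jset (W : 'M[R]_(m, n)) (i : 'I_m) : {set 'I_n} :=
  [set j | phi W i == W i j + x 0 j].

Definition maxJ (W H : 'M[R]_(m, n)) (i : 'I_m) : R :=
  setmax (Jset W i) (fun j => H i j).

Definition Kset (W H : 'M[R]_(m, n)) (i : 'I_m) : {set 'I_n} :=
  [set k | H i k > maxJ W H i].

Definition eps_i (W H : 'M[R]_(m, n)) (i : 'I_m) : \bar R :=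
  \big[Order.min/+oo%E]_(k in Kset W H i)
     (((phi W i - (W i k + x 0 k)) / (H i k - maxJ W H i))%:E).

Definition eps (W H : 'M[R]_(m, n)) : \bar R :=
  \big[Order.min/+oo%E]_(i < m) eps_i W H i.

End Dil.

(* Main.v *)
Require Import Defs.
From HB Require Import structures.
From mathcomp Require Import all_boot all_order all_algebra.
From mathcomp Require Import reals constructive_ereal.
From mathcomp Require Import lra.
Import Order.TTheory GRing.Theory Num.Theory.
Local Open Scope ring_scope.

Lemma setmaxP (R : realType) (I : finType) (A : {set I}) (F : I -> R) j0 :
  j0 \in A ->
  (exists2 j, j \in A & setmax A F = F j) /\ (forall j, j \in A -> F j <= setmax A F).
Proof.
move=> Aj0; rewrite /setmax; case: pickP => [j1 Aj1|/(_ j0)]; last by rewrite Aj0.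
split; last by move=> j Aj; apply: le_bigmax_cond.
apply: (big_ind (fun v => exists2 j, j \in A & v = F j)).
- by exists j1.
- move=> a b [ja Ha ->] [jb Hb ->]; case: (leP (F ja) (F jb)) => _.
  + by exists jb.
  + by exists ja.
- by move=> j Aj; exists j.
Qed.

Arguments setmaxP {R I A} F {j0}.
Section Row.
Variables (R : realType) (m n : nat) (hn : (0 < n)%N)
  (x : 'rV[R]_n) (W H : 'M[R]_(m, n)) (eta : R) (heta : 0 <= eta) (i : 'I_m).

Lemma row_equiv :
  ((eta%:E <= eps_i x W H i)%E) <->
  phi x (W + eta *: H) i = phi x W i + eta * maxJ x W H i.
Proof.
have j0 : 'I_n := Ordinal hn.
have [[ja _ Ea] Ua] := setmaxP (fun j => W i j + x 0 j) (in_setT j0).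
have Jja : ja \in Jset x W i by rewrite inE /phi Ea.
have [[jm Jjm Em] Um] := setmaxP (fun j => H i j) Jja.
have phiE : phi x W i = W i jm + x 0 jm by move: Jjm; rewrite inE => /eqP.
have MJ : maxJ x W H i = H i jm by rewrite /maxJ Em.
have [[jb _ Eb] Ub] := setmaxP (fun j => (W + eta *: H) i j + x 0 j) (in_setT j0).
have phi'E : phi x (W + eta *: H) i = (W + eta *: H) i jb + x 0 jb by rewrite /phi Eb.
have Ub' : forall j, (W + eta *: H) i j + x 0 j <= phi x (W + eta *: H) i.
  by move=> j; apply: Ub; rewrite inE.
have Ua' : forall j, W i j + x 0 j <= phi x W i by move=> j; apply: Ua; rewrite inE.
have Um' : forall j, j \in Jset x W i -> H i j <= maxJ x W H i by move=> j /Um.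
have ge : phi x W i + eta * maxJ x W H i <= phi x (W + eta *: H) i.
  apply: le_trans (Ub' jm); rewrite !mxE phiE MJ; lra.
split.
- move=> /bigmin_geP [_ Hk]; apply/le_anti; rewrite ge andbT phi'E !mxE.
  case: (leP (H i jb) (maxJ x W H i)) => hb.
  + have := Ua' jb; have := ler_wpM2l heta hb; lra.
  + have Kb : jb \in Kset x W H i by rewrite inE.
    have := Hk _ Kb; rewrite lee_fin ler_pdivlMr ?subr_gt0 //; lra.
- move=> E; apply/bigmin_geP; split; first by rewrite leey.
  move=> k; rewrite inE => hk; rewrite lee_fin ler_pdivlMr ?subr_gt0 //.
  have := Ub' k; rewrite E !mxE; lra.
Qed.
End Row.

Theorem proposition1 (R : realType) (m n : nat) (hm : (0 < m)%N) (hn : (0 < n)%N)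
  (x : 'rV[R]_n) (W H : 'M[R]_(m, n)) (eta : R) (heta : 0 <= eta) :
  ((eta%:E <= eps x W H)%E) <->
  delta x (W + eta *: H) = delta x W + eta *: \col_i maxJ x W H i.
Proof.
split.
- move=> /bigmin_geP [_ Hi]; apply/colP => i; rewrite !mxE.
  by apply/(@row_equiv _ _ _ hn x W H _ heta i); apply: Hi.
- move=> E; apply/bigmin_geP; split; first by rewrite leey.
  move=> i _; apply/(@row_equiv _ _ _ hn x W H _ heta i).
  by move/colP: E => /(_ i); rewrite !mxE.
Qed.
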